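(* Let $q$ be a prime power, $h\geq 2$, let $f:\mathbb{F}_{q^h}\to\mathbb{F}_q$ be a nonzero $\mathbb{F}_q$-linear functional, $\alpha\in\mathbb{F}_{q^h}\setminus\mathbb{F}_q$ and $\beta\in\mathbb{F}_{q^h}\setminus\{0\}$. Let $\mathcal{L}=\{(x:f(x)+y\alpha:y\beta): x\in\mathbb{F}_{q^h},\ y\in\mathbb{F}_q,\ (x,y)\neq(0,0)\}$ and let $\varphi$ be the collineation of $\mathrm{PG}(2,q^h)$ given by $(x:y:z)\mapsto(z:x:y)$. Suppose that (1) $f(\alpha/\beta)\neq 1$, and (2) for all $k\in\mathbb{F}_q$, $k\neq f\left(\frac{\alpha^2}{\beta}\right)+\left(f\left(\frac{\beta^2}{\alpha+k}\right)+k\right)f\left(\frac{\alpha}{\beta}\right)+k f\left(\frac{\beta^2}{\alpha+k}\right)f\left(\frac{1}{\beta}\right)$. Then $\mathcal{L}$ and $\varphi(\mathcal{L})$ are disjoint.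
   Context: Points of $\mathrm{PG}(2,q^h)$ are written in homogeneous coordinates $(a:b:c)$. *)

(* Defs.v *)
From HB Require Import structures.
From mathcomp Require Import all_boot all_order all_algebra all_field.
Set Implicit Arguments. Unset Strict Implicit. Unset Printing Implicit Defensive.
Import GRing.Theory.
Local Open Scope ring_scope.

(* Two coordinate triples represent the same point of PG(2, L)
   (both assumed nonzero): they are proportional by a nonzero scalar. *)
Definition same_point (L : fieldType) (P Q : L * L * L) : Prop :=
  exists c : L, c != 0 /\
    [/\ P.1.1 = c * Q.1.1, P.1.2 = c * Q.1.2 & P.2 = c * Q.2].

Definition phi (L : Type) (P : L * L * L) : L * L * L :=
  (P.2, P.1.1, P.1.2).

Definition Lpt (F : fieldType) (L : fieldExtType F) (f : L -> F^o)
  (alpha beta : L) (x : L) (y : F) : L * L * L :=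
  (x, (f x)%:A + y *: alpha, y *: beta).

Definition inLset (F : fieldType) (L : fieldExtType F) (f : L -> F^o)
  (alpha beta : L) (P : L * L * L) : Prop :=
  exists (x : L) (y : F), (x != 0 \/ y != 0) /\ same_point P (Lpt f alpha beta x y).

(* Main.v *)
Require Import Defs.
From HB Require Import structures.
From mathcomp Require Import all_boot all_order all_algebra all_field.
From mathcomp Require Import ring.
Import GRing.Theory.
Local Open Scope ring_scope.

Theorem theorem4p1 (F : finFieldType) (L : fieldExtType F) (h : nat)
  (hdim : \dim {:L} = h) (h2 : (2 <= h)%N)
  (f : {linear L -> F^o}) (fnz : exists x : L, f x != 0)
  (alpha beta : L) (halpha : alpha \notin 1%VS) (hbeta : beta != 0)
  (H1 : f (alpha / beta) != 1)
  (H2 : forall k : F,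
     k != f (alpha ^+ 2 / beta)
          + (f (beta ^+ 2 / (alpha + k%:A)) + k) * f (alpha / beta)
          + k * f (beta ^+ 2 / (alpha + k%:A)) * f (beta^-1)) :
  forall P : L * L * L,
    inLset f alpha beta P ->
    ~ (exists Q : L * L * L, inLset f alpha beta Q /\ P = phi Q).
Proof.
move=> P [x [y [nz [c [c0 [P1 P2 P3]]]]]] [Q [[x' [y' [nz' [d [d0 [Q1 Q2 Q3]]]]]] EP]].
subst P; case: Q P1 P2 P3 Q1 Q2 Q3 => [[q1 q2] q3].
rewrite /phi /Lpt /= => P1 P2 P3 Q1 Q2 Q3.
have E1 : c * x = d * (y'%:A * beta) by rewrite mulr_algl -P1 -Q3.
have E2 : c * ((f x)%:A + y%:A * alpha) = d * x' by rewrite mulr_algl -P2 -Q1.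
have E3 : c * (y%:A * beta) = d * ((f x')%:A + y'%:A * alpha).
  by rewrite !mulr_algl -P3 -Q2.
have notF : forall r : F, alpha != r%:A.
  move=> r; apply: contra halpha => /eqP ->; exact: rpredZ (memv_line 1).
have alg0 : forall r : F, ((r%:A : L) == 0) = (r == 0).
  by move=> r; rewrite scaler_eq0 oner_eq0 orbF.
have algM : forall a b : F, (a%:A : L) * b%:A = (a * b)%:A.
  by move=> a b; rewrite mulr_algl scalerA.
have algD : forall a b : F, (a%:A : L) + b%:A = (a + b)%:A.
  by move=> a b; rewrite scalerDl.
have fZ : forall (a : F) (u : L), f (a%:A * u) = a * f u.
  by move=> a u; rewrite mulr_algl linearZ.
have a0 : alpha != 0 by move: (notF 0); rewrite scale0r.
case: (eqVneq y' 0) => [y'0 | y'n0].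
  subst y'; rewrite scale0r mul0r mulr0 in E1.
  move/eqP: E1; rewrite mulf_eq0 (negbTE c0) /= => /eqP x0; subst x.
  have yn0 : y != 0 by case: nz => //; rewrite eqxx.
  rewrite linear0 scale0r add0r in E2.
  rewrite scale0r mul0r addr0 in E3.
  have yA : (y%:A : L) != 0 by rewrite alg0.
  have ex' : x' = c * (y%:A * alpha) / d.
    by apply: (mulfI d0); rewrite -E2; field.
  have efx : (f x')%:A = c * (y%:A * beta) / d.
    by apply: (mulfI d0); rewrite -E3; field.
  have hx' : x' = (f x')%:A * (alpha / beta).
    by rewrite efx ex'; field; rewrite hbeta d0.
  have fx0 : f x' != 0.
    apply: contraNneq c0 => fx0; move: efx; rewrite fx0 scale0r => /esym/eqP.
    rewrite !mulf_eq0 invr_eq0 (negbTE yA) (negbTE hbeta) (negbTE d0) !orbF.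
    by move=> ->.
  have e : f x' * 1 = f x' * f (alpha / beta) by rewrite mulr1 {1}hx' fZ mulrC.
  by move: H1; rewrite -(mulfI fx0 e) eqxx.
case: (eqVneq y 0) => [y0 | yn0].
  subst y; rewrite scale0r mul0r mulr0 in E3.
  move/esym/eqP: E3; rewrite mulf_eq0 (negbTE d0) /= addr_eq0 => /eqP e.
  have : alpha = (- f x' / y')%:A.
    apply: (mulfI (_ : (y'%:A : L) != 0)); first by rewrite alg0.
    by rewrite -(opprK (y'%:A * alpha)) -e algM -scaleNr; congr (_ *: _); field; rewrite ?y'n0.
  by move/eqP; rewrite (negbTE (notF _)).
set k := f x' / y'.
have ek : (f x')%:A = (y'%:A : L) * k%:A by rewrite algM /k; congr (_ *: _); field.
have ak : alpha + k%:A != 0.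
  by apply: contra (notF (- k)) => /eqP e; rewrite scaleNr -subr_eq0 opprK e.
set b := f (beta ^+ 2 / (alpha + k%:A)).
have yA : (y%:A : L) != 0 by rewrite alg0.
have y'A : (y'%:A : L) != 0 by rewrite alg0.
have ec : c = d * y'%:A * (alpha + k%:A) / (y%:A * beta).
  apply: (mulIf (_ : y%:A * beta != 0)); first by apply: mulf_neq0.
  rewrite -mulrA E3 ek; field; by rewrite hbeta yA.
have ex : x = y%:A * (beta ^+ 2 / (alpha + k%:A)).
  apply: (mulfI c0); rewrite E1 ec; field.
  by rewrite ak hbeta ?yA ?y'A ?d0.
have efx : f x = y * b by rewrite ex fZ.
have ex' : x' = y'%:A * (alpha ^+ 2 / beta + (k + b)%:A * (alpha / beta)
                 + (k * b)%:A * beta^-1).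
  apply: (mulfI d0); rewrite -E2 efx ec -(algM k b) -(algM y b) -(algD k b); field.
  by rewrite yA hbeta.
have efx' : f x' = y' * k by rewrite /k; field.
move: efx'; rewrite {1}ex' fZ !linearD /= !fZ => /(mulfI y'n0) ek'.
by move: (H2 k); rewrite -/b (addrC b k) ek' eqxx.
Qed.
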